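(* Let $\mathbf{k}$ be a commutative unital ring and $R$ a $\mathbf{k}$-algebra. Let $P_1,P_2:R\to R$ be extended Rota-Baxter operators of weights $(\lambda_1,\kappa_1)$ and $(\lambda_2,\kappa_2)$ respectively. Suppose there are $\alpha_{ij},\beta_{ij},\gamma_{ij}\in\mathbf{k}$ for $(i,j)\in\{(1,2),(2,1)\}$ such that for $1\le i\neq j\le 2$ and all $u,v\in R$, $$P_i(u)P_j(v)=P_i(uP_j(v))+P_j(P_i(u)v)+\alpha_{ij}P_i(uv)+\beta_{ij}P_j(uv)+\gamma_{ij}uv.$$ If $\beta_{12}+\alpha_{21}=\lambda_1$ and $\alpha_{12}+\beta_{21}=\lambda_2$, then for all $a,b\in\mathbf{k}$ the operator $Q:=aP_1+bP_2$ is an extended Rota-Baxter operator of weight $\big(a\lambda_1+b\lambda_2,\ a^2\kappa_1+b^2\kappa_2+ab(\gamma_{12}+\gamma_{21})\big)$.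
   Context: For $\lambda,\kappa\in\mathbf{k}$, an extended Rota-Baxter operator of weight $(\lambda,\kappa)$ on a $\mathbf{k}$-algebra $R$ is a $\mathbf{k}$-linear map $P:R\to R$ such that $P(x)P(y)=P(xP(y))+P(P(x)y)+\lambda P(xy)+\kappa xy$ for all $x,y\in R$. *)

(* Defs.v *)
From HB Require Import structures.
From mathcomp Require Import all_boot all_order all_algebra.
Set Implicit Arguments. Unset Strict Implicit. Unset Printing Implicit Defensive.
Import GRing.Theory.
Local Open Scope ring_scope.

Definition extended_RB (k : comNzRingType) (R : algType k)
    (lambda kappa : k) (P : R -> R) : Prop :=
  linear P /\ forall x y : R,
    P x * P y = P (x * P y) + P (P x * y) + lambda *: P (x * y) + kappa *: (x * y).

(* Main.v *)
Require Import Defs.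
From HB Require Import structures.
From mathcomp Require Import all_boot all_order all_algebra ring.
Import GRing.Theory.
Local Open Scope ring_scope.

Section DN.

Variables (k : comNzRingType) (V : lmodType k).
Definition dn := (k * V)%type.
HB.instance Definition _ := GRing.Zmodule.on dn.
Definition dmul (x y : dn) : dn := (x.1 * y.1, x.1 *: y.2 + y.1 *: x.2).
Definition done : dn := (1, 0).
Lemma dmulA : associative dmul.
Proof. move=> [a u] [b v] [c w]; rewrite /dmul /=; congr pair; first by rewrite mulrA.
by rewrite !scalerDr !scalerA addrA [c * a]mulrC [c * b]mulrC.
Qed.
Lemma dmulC : commutative dmul.
Proof. by move=> [a u] [b v]; rewrite /dmul /= mulrC addrC. Qed.
Lemma dmul1 : left_id done dmul.
Proof. by move=> [a u]; rewrite /dmul /= mul1r scale1r scaler0 addr0. Qed.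
Lemma dmulDl : left_distributive dmul +%R.
Proof. move=> [a u] [b v] [c w]; rewrite /dmul /=; congr pair; first by rewrite mulrDl.
by rewrite scalerDl scalerDr addrACA. Qed.
Lemma done_neq0 : done != 0.
Proof. apply/eqP => -[] /eqP; by rewrite oner_eq0. Qed.
HB.instance Definition _ := GRing.Zmodule_isComNzRing.Build dn dmulA dmulC dmul1 dmulDl done_neq0.

Definition vv (v : V) : dn := (0, v).
Definition ss (c : k) : dn := (c, 0).
Lemma vvD u v : vv (u + v) = vv u + vv v.
Proof. rewrite /vv. apply: (congr2 pair) => /=; by rewrite ?(addr0, mulr0, scaler0, scale0r). Qed.
Lemma vvZ c v : vv (c *: v) = ss c * vv v.
Proof. rewrite /vv /ss /=. apply: (congr2 pair) => /=; by rewrite ?(addr0, mulr0, scaler0, scale0r). Qed.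
Lemma ssD a b : ss (a + b) = ss a + ss b.
Proof. rewrite /ss; apply: (congr2 pair) => /=; by rewrite ?(addr0, mulr0, scaler0, scale0r). Qed.
Lemma ssM a b : ss (a * b) = ss a * ss b.
Proof. rewrite /ss; apply: (congr2 pair) => /=; by rewrite ?(addr0, mulr0, scaler0, scale0r). Qed.
Lemma vv_inj : injective vv. Proof. by move=> u v []. Qed.
End DN.

Lemma ssX (k : comNzRingType) (V : lmodType k) (a : k) : @ss k V (a ^+ 2) = @ss k V a * @ss k V a.
Proof. by rewrite expr2 ssM. Qed.

Theorem theorem2p4 (k : comNzRingType) (R : algType k)
    (P1 P2 : R -> R) (l1 k1 l2 k2 : k)
    (a12 b12 c12 a21 b21 c21 : k) :
  extended_RB l1 k1 P1 ->
  extended_RB l2 k2 P2 ->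
  (forall u v : R, P1 u * P2 v = P1 (u * P2 v) + P2 (P1 u * v)
      + a12 *: P1 (u * v) + b12 *: P2 (u * v) + c12 *: (u * v)) ->
  (forall u v : R, P2 u * P1 v = P2 (u * P1 v) + P1 (P2 u * v)
      + a21 *: P2 (u * v) + b21 *: P1 (u * v) + c21 *: (u * v)) ->
  b12 + a21 = l1 ->
  a12 + b21 = l2 ->
  forall a b : k,
    extended_RB (a * l1 + b * l2)
      (a ^+ 2 * k1 + b ^+ 2 * k2 + a * b * (c12 + c21))
      (fun x => a *: P1 x + b *: P2 x).
Proof.
move=> [L1 RB1] [L2 RB2] H12 H21 E1 E2 a b.
have P1D u v : P1 (u + v) = P1 u + P1 v by move: (L1 1 u v); rewrite !scale1r.
have P2D u v : P2 (u + v) = P2 u + P2 v by move: (L2 1 u v); rewrite !scale1r.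
have P1Z c u : P1 (c *: u) = c *: P1 u.
  have P0 : P1 0 = 0 by apply: (@addrI _ (P1 0)); rewrite -P1D !addr0.
  by rewrite -[c *: u]addr0 L1 P0 addr0.
have P2Z c u : P2 (c *: u) = c *: P2 u.
  have P0 : P2 0 = 0 by apply: (@addrI _ (P2 0)); rewrite -P2D !addr0.
  by rewrite -[c *: u]addr0 L2 P0 addr0.
subst l1 l2.
split.
  move=> c x y /=.
  rewrite P1D P2D !P1Z !P2Z.
  apply: (@vv_inj _ R); rewrite !(vvD, vvZ, ssD, ssM); ring.
move=> x y.
rewrite !(mulrDl, mulrDr) -!(scalerAl, scalerAr) RB1 RB2 H12 H21.
rewrite !(P1D, P2D, P1Z, P2Z).
apply: (@vv_inj _ R); rewrite !(vvD, vvZ, ssD, ssM, ssX); ring.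
Qed.
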